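(* Let $(S,\mathcal{S})$ be a measurable space with $\Delta\in\mathcal{S}\otimes\mathcal{S}$, and let $\mathcal{R}\subseteq \mathcal{S}$ be a ring of sets with $\sigma(\mathcal{R})=\mathcal{S}$. If $\pi_{1},\pi_{2}: \Omega\to C(S)$ are two cr-sets satisfying $P(\pi_{1}\cap A\neq \emptyset)=P(\pi_{2}\cap A\neq \emptyset)$ for all $A\in\mathcal{R}$, and if $\pi_{1}$ is $\sigma$-finite on $\mathcal{R}$, then $P_{\pi_{1}}=P_{\pi_{2}}$.
   Context: $\Delta=\{(x,x)\mid x\in S\}$ is the diagonal of $S\times S$. $(\Omega,\mathcal{F},P)$ is a probability space. $C(S)$ denotes the set of all countable (finite or denumerable) subsets of $S$. For $A\subseteq S$, $N_A:C(S)\to\mathbb{N}_0\cup\{\infty\}$, $M\mapsto |A\cap M|$. $\mathcal{C}(\mathcal{S})$ is the smallest $\sigma$-field on $C(S)$ making all $N_A$, $A\in\mathcal{S}$, measurable. A cr-set is an $\mathcal{F}$-$\mathcal{C}(\mathcal{S})$ measurable map $\pi:\Omega\to C(S)$; $P_\pi$ denotes its law. A map $\tau:\Omega\to C(S)$ is $\sigma$-finite on $\mathcal{E}\subseteq\mathcal{S}$ if there are $A_n\in\mathcal{E}$, $n\in\mathbb{N}$, with $S=\bigcup_n A_n$ such that $|\tau(\omega)\cap A_n|<\infty$ for all $\omega\in\Omega$ and all $n$. *)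

(* Defs.v *)
From HB Require Import structures.
From mathcomp Require Import all_boot all_order all_algebra.
From mathcomp Require Import finmap all_classical all_reals all_analysis.
Set Implicit Arguments. Unset Strict Implicit. Unset Printing Implicit Defensive.
Import Order.TTheory GRing.Theory Num.Theory.
Local Open Scope classical_set_scope.
Local Open Scope fset_scope.

Definition CS (S : Type) := {M : set S | countable M}.

(* N_A(M) = |A ∩ M| in N_0 ∪ {∞}; [None] encodes ∞. *)
Definition NA (S : choiceType) (A : set S) (M : CS S) : option nat :=
  if pselect (finite_set (A `&` proj1_sig M))
  then Some (#|` fset_set (A `&` proj1_sig M)|)%fset
  else None.

(* \mathcal{C}(\mathcal{S}): smallest sigma-field on C(S) making all N_A,
   A measurable, measurable (N_0 ∪ {∞} carrying its discrete sigma-field). *)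
Definition CSigma (d : measure_display) (S : measurableType d) : set (set (CS S)) :=
  <<s [set B | exists A (n : option nat),
         measurable A /\ B = [set M | NA A M = n]] >>.

Definition crset (dO d : measure_display) (Omega : measurableType dO)
  (S : measurableType d) (pi : Omega -> CS S) : Prop :=
  forall B, CSigma B -> measurable (pi @^-1` B).

Definition sigma_finite_on (Omega : Type) (S : Type) (tau : Omega -> CS S)
  (E : set (set S)) : Prop :=
  exists A : nat -> set S, (forall n, E (A n)) /\ \bigcup_n A n = setT /\
    forall w n, finite_set (proj1_sig (tau w) `&` A n).

Definition law (dO d : measure_display) (Omega : measurableType dO)
  (S : measurableType d) (R : realType) (P : probability Omega R)
  (pi : Omega -> CS S) : set (CS S) -> \bar R :=
  fun B => P (pi @^-1` B).

(* Main.v *)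
Require Import Defs.
From HB Require Import structures.
From mathcomp Require Import all_boot all_order all_algebra.
From mathcomp Require Import finmap all_classical all_reals all_analysis.
Set Implicit Arguments. Unset Strict Implicit. Unset Printing Implicit Defensive.
Import Order.TTheory GRing.Theory Num.Theory.
Local Open Scope classical_set_scope.

Section SigmaHelp.
Context {T : Type} (G : set (set T)).
Local Notation Sg := (<<s G >>).
Lemma sg0 : Sg set0. Proof. exact: sigma_algebra0. Qed.
Lemma sgC A : Sg A -> Sg (~` A).
Proof. by move=> h; rewrite -setTD; exact: sigma_algebraCD. Qed.
Lemma sgT : Sg setT. Proof. by have := sgC sg0; rewrite setC0. Qed.
Lemma sgU (F : (set T)^nat) : (forall i, Sg (F i)) -> Sg (\bigcup_i F i).
Proof. exact: sigma_algebra_bigcup. Qed.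
Lemma sgU2 A B : Sg A -> Sg B -> Sg (A `|` B).
Proof.
move=> hA hB; rewrite -bigcup2E; apply: sgU => -[|[|i]] //=; exact: sg0.
Qed.
Lemma sgI2 A B : Sg A -> Sg B -> Sg (A `&` B).
Proof.
by move=> hA hB; have := sgC (sgU2 (sgC hA) (sgC hB)); rewrite setCU !setCK.
Qed.
Lemma sgD A B : Sg A -> Sg B -> Sg (A `\` B).
Proof. by move=> hA hB; rewrite setDE; apply: sgI2 => //; exact: sgC. Qed.
Lemma sgIn (F : (set T)^nat) : (forall i, Sg (F i)) -> Sg (\bigcap_i F i).
Proof.
move=> h; have := sgC (sgU (fun i => sgC (h i))).
by rewrite -setC_bigcap setCK.
Qed.
Lemma sgUc (I : countType) (F : I -> set T) : (forall i, Sg (F i)) ->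
  Sg (\bigcup_(i in [set: I]) F i).
Proof.
move=> h.
have -> : \bigcup_(i in [set: I]) F i =
   \bigcup_n (if (@choice.unpickle I n) is Some i then F i else set0).
  apply/seteqP; split => [x [i _ Fx]|x [n _]].
    by exists (choice.pickle i) => //; rewrite choice.pickleK.
  by case: (@choice.unpickle I n) => // i Fx; exists i.
by apply: sgU => n; case: (@choice.unpickle I n) => //; exact: sg0.
Qed.
Lemma sgIs (I : eqType) (s : seq I) (F : I -> set T) : (forall i, Sg (F i)) ->
  Sg [set x | forall i, i \in s -> F i x].
Proof.
move=> h; elim: s => [|a s IH].
  by rewrite (_ : [set x | _] = setT); [exact: sgT|apply/seteqP; split].
rewrite (_ : [set x | _] = F a `&` [set x | forall i, i \in s -> F i x]).
  exact: sgI2.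
apply/seteqP; split => [x H|x [Fa H] i].
  by split; [apply: H; rewrite mem_head|move=> i ins; apply: H; rewrite in_cons ins orbT].
by rewrite in_cons => /orP[/eqP->//|]; exact: H.
Qed.
End SigmaHelp.

Lemma sub_card (T : choiceType) (Y : {fset T}) n : (n <= #|` Y|)%N ->
  exists X : {fset T}, #|` X| = n /\ [set` X] `<=` [set` Y].
Proof.
move=> nY; exists [fset x in take n (enum_fset Y)]%fset; split.
  rewrite card_fseq undup_id ?size_take_min ?(minn_idPl nY)//.
  by apply: take_uniq; exact: fset_uniq.
move=> x /=; rewrite inE => /mem_take; done.
Qed.
Section NAsec.
Variable S : choiceType.
Definition geN n (A : set S) (M : CS S) :=
  exists X : {fset S}, #|` X|%fset = n /\ [set` X] `<=` A `&` proj1_sig M.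

Lemma NA_fin (A : set S) (M : CS S) : finite_set (A `&` proj1_sig M) ->
  NA A M = Some (size (enum_fset (fset_set (A `&` proj1_sig M)))).
Proof. by rewrite /NA; case: pselect. Qed.
Lemma NA_inf (A : set S) (M : CS S) : ~ finite_set (A `&` proj1_sig M) -> NA A M = None.
Proof. by rewrite /NA; case: pselect. Qed.

Lemma geN_fin (A : set S) (M : CS S) n : finite_set (A `&` proj1_sig M) ->
  geN n A M <-> (n <= size (enum_fset (fset_set (A `&` proj1_sig M))))%N.
Proof.
move=> fin; split.
- move=> [X [<- XA]]; apply: fsubset_leq_card; apply/fsubsetP => x xX.
  by rewrite in_fset_set //; apply/mem_set; exact: XA.
- move=> h; have [X [cX sX]] := sub_card h; exists X; split => //.
  by rewrite fset_setK in sX.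
Qed.

Lemma geN_inf (A : set S) (M : CS S) n : ~ finite_set (A `&` proj1_sig M) -> geN n A M.
Proof.
move=> inf; have [B BA Bn] := infinite_set_fset n inf.
have [X [cX sX]] := sub_card Bn; exists X; split => //; exact: subset_trans sX BA.
Qed.

Lemma NA_geN (A : set S) (M : CS S) n : NA A M = Some n <-> geN n A M /\ ~ geN n.+1 A M.
Proof.
case: (pselect (finite_set (A `&` proj1_sig M))) => fin.
- rewrite NA_fin // !geN_fin //; split => [[<-]|[h1 h2]].
    by split => //; rewrite ltnn.
  congr Some; apply/eqP; rewrite eqn_leq h1 andbT leqNgt; apply/negP => h.
  exact: h2.
- by rewrite NA_inf //; split => // -[_ h]; exfalso; apply: h; exact: geN_inf.
Qed.

Lemma geN_mono (A B : set S) (M : CS S) n : A `<=` B -> geN n A M -> geN n B M.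
Proof.
move=> AB [X [cX sX]]; exists X; split => // x /sX [Ax Mx]; split => //.
exact: AB.
Qed.
End NAsec.

Lemma seq_bound (T : eqType) (s : seq T) (P : nat -> T -> Prop) :
  (forall m m' x, (m <= m')%N -> P m x -> P m' x) ->
  (forall x, x \in s -> exists m, P m x) -> exists m, forall x, x \in s -> P m x.
Proof.
move=> mono; elim: s => [|a s IH] h; first by exists 0%N.
have [m1 h1] := h a (mem_head _ _).
have [m2 h2] : exists m, forall x, x \in s -> P m x.
  by apply: IH => x xs; apply: h; rewrite in_cons xs orbT.
exists (maxn m1 m2) => x; rewrite in_cons => /orP[/eqP->|xs].
  by apply: mono h1; exact: leq_maxl.
by apply: mono (h2 _ xs); exact: leq_maxr.
Qed.

Section NAincr.
Variable S : choiceType.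
Variable X : nat -> set S.
Hypothesis ndX : forall i j, (i <= j)%N -> X i `<=` X j.

Lemma geN_bigcup (M : CS S) n : geN n (\bigcup_i X i) M -> exists m, geN n (X m) M.
Proof.
move=> [Y [cY sY]].
have [m hm] : exists m, forall x, x \in enum_fset Y -> X m x.
  apply: seq_bound; first by move=> m m' x mm'; exact: ndX.
  by move=> x xY; have [[i _ Xi] _] := sY x xY; exists i.
by exists m, Y; split => // x xY; split; [exact: hm|exact: (sY x xY).2].
Qed.

Lemma NA_incr (M : CS S) n : NA (\bigcup_i X i) M = Some n <->
  exists m, forall i, NA (X (i + m)) M = Some n.
Proof.
split.
- move=> /NA_geN [h1 h2]; have [m hm] := geN_bigcup h1; exists m => i.
  apply/NA_geN; split.
    by apply: geN_mono hm; apply: ndX; exact: leq_addl.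
  by move=> h; apply: h2; apply: geN_mono h => x Xx; exists (i + m)%N.
- move=> [m hm]; apply/NA_geN; have [h1 _] := (NA_geN _ _ _).1 (hm 0%N).
  split; first by apply: geN_mono h1 => x Xx; exists (0 + m)%N.
  move=> /geN_bigcup [m1 h]; have [_ h2] := (NA_geN _ _ _).1 (hm m1).
  by apply: h2; apply: geN_mono h; apply: ndX; exact: leq_addr.
Qed.
End NAincr.
Section Atoms.
Variable S : choiceType.
Variable e : nat -> set S.

Fixpoint atom (k : nat) (A : set S) (b : seq bool) : set S :=
  match b with
  | [::] => A
  | c :: b' => atom k.+1 (if c then A `&` e k else A `\` e k) b'
  end.

Lemma atomE k A b x : atom k A b x <->
  A x /\ forall i, (i < size b)%N -> (e (k + i) x <-> nth false b i).
Proof.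
elim: b k A => [|c b IH] k A /=; first by split => [h|[]//]; split => // i.
rewrite IH; split.
- move=> [Ax h]; split; first by case: c Ax => -[].
  move=> [|i] /=; rewrite ?addn0.
    by move=> _; case: c Ax => -[] //= _ ?; split.
  by rewrite ltnS addnS -addSn; exact: h.
- move=> [Ax h]; split; last first.
    by move=> i ib; rewrite addSn -addnS; exact: (h i.+1).
  have := h 0%N erefl; rewrite addn0 /=; clear h.
  by case: c => -[h1 h2]; split => //; [exact: h2|move=> /h1].
Qed.

Lemma atom_sub k A b : atom k A b `<=` A.
Proof. by move=> x /atomE[]. Qed.

Lemma atom_disj k A b b' x : size b = size b' ->
  atom k A b x -> atom k A b' x -> b = b'.
Proof.
move=> sb /atomE[_ h1] /atomE[_ h2].
apply: (eq_from_nth (x0:=false)) => // i ib.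
have [f1 g1] := h1 i ib; have [f2 g2] : e (k + i) x <-> nth false b' i.
  by apply: h2; rewrite -sb.
by apply/idP/idP => H; [apply: f2; apply: g1|apply: f1; apply: g2].
Qed.

Lemma atom_ring (Rg : set (set S)) : setring Rg -> (forall i, Rg (e i)) ->
  forall k A b, Rg A -> Rg (atom k A b).
Proof.
move=> [R0 RU RD] Re k A b; elim: b k A => [|c b IH] k A RA //=.
apply: IH; case: c; last by apply: (RD).
by rewrite -setDD; apply: (RD) => //; apply: (RD).
Qed.

Definition Hset n (A : set S) : set (CS S) :=
  \bigcup_(p in [set: nat * seq (seq bool)])
    (if uniq p.2 && (size p.2 == n) && all (fun b => size b == p.1) p.2
     then [set M | forall b, b \in p.2 -> proj1_sig M `&` atom 0 A b !=set0]
     else set0).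

Lemma H_geN_aux m A (M : CS S) (s : seq (seq bool)) : uniq s ->
  all (fun b => size b == m) s ->
  (forall b, b \in s -> proj1_sig M `&` atom 0 A b !=set0) ->
  exists X : {fset S}, #|` X|%fset = size s /\ [set` X] `<=` A `&` proj1_sig M /\
    forall x, x \in X -> exists2 b, b \in s & atom 0 A b x.
Proof.
elim: s => [|b s IH] /=.
  move=> _ _ _; exists fset0%fset; split; first by rewrite cardfs0.
  by split => x; rewrite ?inE.
move=> /andP[bs us] /andP[/eqP sb sa] h.
have [X [cX [sX hX]]] : exists X : {fset S}, #|` X|%fset = size s /\
    [set` X] `<=` A `&` proj1_sig M /\
    forall x, x \in X -> exists2 b, b \in s & atom 0 A b x.
  by apply: IH => // b' b's; apply: h; rewrite in_cons b's orbT.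
have [x [Mx ax]] := h b (mem_head _ _).
have xX : x \notin X.
  apply/negP => /hX [b' b's ab']; move: bs; rewrite (@atom_disj 0 A b b' x) //.
    by rewrite b's.
  by move/allP: sa => /(_ b' b's) /eqP ->.
exists (x |` X)%fset; split; first by rewrite cardfsU1 xX cX.
split.
  move=> y /=; rewrite in_fset1U => /orP[/eqP->|yX]; last exact: sX.
  by split => //; exact: atom_sub ax.
move=> y; rewrite in_fset1U => /orP[/eqP->|/hX [b' b's ab']].
  by exists b => //; rewrite mem_head.
by exists b' => //; rewrite in_cons b's orbT.
Qed.

Hypothesis sep : forall x y : S, x <> y -> exists i, ~ (e i x <-> e i y).

Lemma geN_H n A M : geN n A M <-> Hset n A M.
Proof.
split; last first.
  move=> [[m s] _ /=]; case: ifP => // /andP[/andP[us /eqP sn] sa] h.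
  have [X [cX [sX _]]] := H_geN_aux us sa h.
  by exists X; split => //; rewrite cX.
move=> [X [cX sX]].
have [f hf] : {f : S * S -> nat & forall xy, xy.1 <> xy.2 ->
    ~ (e (f xy) xy.1 <-> e (f xy) xy.2)}.
  apply: (@choice (S * S)%type nat (fun xy k => xy.1 <> xy.2 -> ~ (e k xy.1 <-> e k xy.2))).
  move=> [x y] /=; have [->|xy] := pselect (x = y); first by exists 0%N.
  by have [i hi] := sep xy; exists i.
have [m hm] : exists m, forall x, x \in enum_fset X ->
    forall y, y \in enum_fset X -> (f (x, y) < m)%N.
  apply: seq_bound.
    by move=> m m' x mm' H y yX; apply: leq_trans (H y yX) mm'.
  move=> x _; apply: seq_bound => //.
    by move=> m m' y mm' H; apply: leq_trans H mm'.
  by move=> y _; exists (f (x, y)).+1.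
pose bv x := [seq asbool (e i x) | i <- iota 0 m].
exists (m, [seq bv x | x <- enum_fset X]) => //=.
have bvi x i : (i < m)%N -> nth false (bv x) i = asbool (e i x).
  by move=> im; rewrite (nth_map 0%N) ?size_iota // nth_iota.
rewrite size_map -/(#|` X|%fset) cX eqxx andbT.
have -> : all (fun b => size b == m) [seq bv x | x <- enum_fset X].
  by apply/allP => b /mapP [x _ ->]; rewrite size_map size_iota.
rewrite andbT map_inj_in_uniq; last first.
  move=> x y xX yX bxy; apply/eqP/negPn/negP => /eqP xy.
  apply: (hf (x, y) xy) => /=; have lt := hm x xX y yX.
  have := bvi x _ lt; rewrite bxy bvi //.
  by move=> h; apply: asbool_eq_equiv; rewrite h.
rewrite fset_uniq => b /mapP [x xX ->]; have [Ax Mx] := sX x xX.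
exists x; split => //; apply/atomE; split => // i.
rewrite size_map size_iota => im; rewrite add0n bvi //.
by split => [h|/asboolW //]; exact: asboolT.
Qed.
End Atoms.
Definition Pi (S : Type) (Rg : set (set S)) : set (set (CS S)) :=
  [set B | exists2 A, Rg A & B = [set M : CS S | proj1_sig M `&` A = set0]].

Lemma ringI (S : Type) (Rg : set (set S)) : setring Rg -> setI_closed Rg.
Proof. by move=> [R0 RU RD] A B RA RB; rewrite -setDD; apply: (RD) => //; apply: (RD). Qed.

Section Step1.
Variable S : choiceType.
Variable Rg : set (set S).
Hypothesis ring : setring Rg.
Variable e : nat -> set S.
Hypothesis Re : forall i, Rg (e i).
Hypothesis sep : forall x y : S, x <> y -> exists i, ~ (e i x <-> e i y).
Local Notation Sg := (<<s Pi Rg >>).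

Lemma nonempty_Sg (A : set S) : Rg A ->
  Sg [set M : CS S | proj1_sig M `&` A !=set0].
Proof.
move=> RA.
have -> : [set M : CS S | proj1_sig M `&` A !=set0] =
    ~` [set M : CS S | proj1_sig M `&` A = set0].
  apply/seteqP; split => M /=; first by move=> /set0P/eqP.
  by move=> h; apply/set0P/eqP.
by apply: sgC; apply: sub_sigma_algebra; exists A.
Qed.

Lemma Hset_Sg n A : Rg A -> Sg (Hset e n A).
Proof.
move=> RA; apply: sgUc => -[m s] /=; case: ifP => _; last exact: sg0.
apply: sgIs => b.
by apply: nonempty_Sg; exact: atom_ring.
Qed.

Lemma NA_Sg n A : Rg A -> Sg [set M | NA A M = Some n].
Proof.
move=> RA; have -> : [set M | NA A M = Some n] = Hset e n A `\` Hset e n.+1 A.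
  have GH := geN_H sep.
  apply/seteqP; split => M /=.
    by move=> /NA_geN [h1 h2]; split; [exact/GH|move=> /GH].
  by move=> [h1 h2]; apply/NA_geN; split; [exact/GH|move=> /GH].
by apply: sgD; exact: Hset_Sg.
Qed.

Definition LF (F : set S) : set (CS S) :=
  [set M | finite_set (proj1_sig M `&` F)].

Lemma LF_Sg F : Rg F -> Sg (LF F).
Proof.
move=> RF; have -> : LF F = \bigcup_k [set M | NA F M = Some k].
  apply/seteqP; split => M /=.
  - move=> fin; exists (size (enum_fset (fset_set (F `&` proj1_sig M)))) => //.
    by apply: NA_fin; rewrite setIC.
  - move=> [k _ h]; case: (pselect (finite_set (F `&` proj1_sig M))) => [fin|nfin].
      by rewrite /LF /= setIC.
    by move: h => /=; rewrite NA_inf.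
by apply: sgU => k; exact: NA_Sg.
Qed.

Lemma NA_D (A B F : set S) M k : B `<=` A -> LF F M ->
  (NA ((A `\` B) `&` F) M = Some k <->
   exists j, NA (A `&` F) M = Some (j + k)%N /\ NA (B `&` F) M = Some j).
Proof.
move=> BA LM.
have fa : finite_set ((A `&` F) `&` proj1_sig M).
  by apply: sub_finite_set LM => x [[_ Fx] Mx].
have fb : finite_set ((B `&` F) `&` proj1_sig M).
  by apply: sub_finite_set LM => x [[_ Fx] Mx].
have fab : finite_set (((A `\` B) `&` F) `&` proj1_sig M).
  by apply: sub_finite_set LM => x [[_ Fx] Mx].
have E : ((A `\` B) `&` F) `&` proj1_sig M =
    ((A `&` F) `&` proj1_sig M) `\` ((B `&` F) `&` proj1_sig M).
  apply/seteqP; split => x /=; first by move=> [[[Ax nBx] Fx] Mx]; split => // -[[]].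
  move=> [[[Ax Fx] Mx] h]; split => //; split => //; split => // Bx; exact: h.
have sub : (fset_set ((B `&` F) `&` proj1_sig M) `<=`
    fset_set ((A `&` F) `&` proj1_sig M))%fset.
  by rewrite -fset_set_sub // => x [[Bx Fx] Mx]; split => //; split => //; exact: BA.
rewrite (NA_fin fab) (NA_fin fa) (NA_fin fb) E fset_setD // cardfsDS //.
split.
- move=> [<-]; eexists; split; last reflexivity.
  by rewrite subnKC // fsubset_leq_card.
- by move=> [j [[->] [<-]]]; rewrite addKn.
Qed.

Definition GF (F : set S) := [set A : set S |
  forall k, Sg ([set M | NA (A `&` F) M = Some k] `&` LF F)].

Lemma GF_full F : Rg F -> <<s Rg >> `<=` GF F.
Proof.
move=> RF; apply: (@lambda_system_subset _ Rg (ringI ring) setT (GF F)) => //.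
- split => //.
  + by move=> k; rewrite setTI; apply: sgI2; [exact: NA_Sg|exact: LF_Sg].
  + move=> A B BA hA hB k.
    have -> : [set M | NA ((A `\` B) `&` F) M = Some k] `&` LF F =
        \bigcup_j (([set M | NA (A `&` F) M = Some (j + k)%N] `&` LF F) `&`
                   ([set M | NA (B `&` F) M = Some j] `&` LF F)).
      apply/seteqP; split => M /=.
      * by move=> [/(NA_D _ BA) h LM]; have [j [h1 h2]] := h LM; exists j.
      * move=> [j _ [[h1 LM] [h2 _]]]; split => //.
        by apply/(NA_D _ BA) => //; exists j.
    by apply: sgU => j; apply: sgI2; [exact: hA|exact: hB].
  + move=> Fs ndF hF k.
    have nd : forall i j, (i <= j)%N -> Fs i `&` F `<=` Fs j `&` F.
      move=> i j ij; apply: setSI; exact/subsetPset/ndF.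
    have -> : [set M | NA ((\bigcup_i Fs i) `&` F) M = Some k] `&` LF F =
        \bigcup_m \bigcap_i ([set M | NA (Fs (i + m)%N `&` F) M = Some k] `&` LF F).
      rewrite setI_bigcupl; apply/seteqP; split => M /=.
      * by move=> [/(NA_incr nd) [m hm] LM]; exists m => // i _; split.
      * move=> [m _ h]; have [_ LM] := h 0%N I; split => //.
        by apply/(NA_incr nd); exists m => i; exact: (h i I).1.
    by apply: sgU => m; apply: sgIn => i; exact: hF.
- move=> A RA k; apply: sgI2; last exact: LF_Sg.
  by apply: NA_Sg; exact: ringI.
Qed.
End Step1.
Definition cgen (T : Type) (G : set (set T)) (E : set T) :=
  exists F : nat -> set T, (forall k, G (F k)) /\ <<s range F >> E.

Lemma cgen_sigma T (G : set (set T)) g0 : G g0 -> <<s G >> `<=` cgen G.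
Proof.
move=> Gg0; apply: smallest_sub; last first.
  move=> A GA; exists (fun _ => A); split => //.
  by apply: sub_sigma_algebra; exists 0%N.
split.
- by exists (fun _ => g0); split => //; exact: sg0.
- by move=> A [F [GF sA]]; exists F; split => //; exact: sigma_algebraCD.
- move=> A hA; have [Fs hFs] := choice hA.
  pose F j := if @choice.unpickle (nat * nat)%type j is Some (n, k)
    then Fs n k else g0.
  exists F; split.
    by move=> j; rewrite /F; case: choice.unpickle => [[n k]|] //; exact: (hFs n).1 k.
  apply: sgU => n; apply: (sub_sigma_algebra2 _ (hFs n).2).
  move=> _ [k _ <-]; exists (choice.pickle (n, k)) => //.
  by rewrite /F choice.pickleK.
Qed.

Lemma sep_sigma T (G : set (set T)) x y : (forall A, G A -> (A x <-> A y)) ->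
  forall A, <<s G >> A -> (A x <-> A y).
Proof.
move=> h; apply: smallest_sub => //; split => //.
- move=> A hA; split => -[_ H]; split => // K; apply: H; exact/hA.
- move=> F hF; split => -[i _ Fi]; exists i => //; exact/hF.
Qed.

Lemma separating d (S : measurableType d) (Rg : set (set S)) :
  setring Rg -> <<s Rg >> = measurable ->
  measurable [set xy : S * S | xy.1 = xy.2] ->
  exists e : nat -> set S, (forall i, Rg (e i)) /\
    forall x y : S, x <> y -> exists i, ~ (e i x <-> e i y).
Proof.
move=> ring RS mD.
have R0 : Rg set0 by case: ring.
rewrite measurable_prod_measurableType in mD.
have [|r [Gr Dr]] := cgen_sigma (g0 := set0 `*` set0) _ mD.
  by exists set0 => //; exists set0.
have [AB hAB] : {AB : nat -> set S * set S & forall k, measurable (AB k).1 /\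
    measurable (AB k).2 /\ r k = (AB k).1 `*` (AB k).2}.
  apply: (@choice nat (set S * set S)%type
    (fun k AB => measurable AB.1 /\ measurable AB.2 /\ r k = AB.1 `*` AB.2)) => k.
  have [A mA [B mB <-]] := Gr k.
  by exists (A, B).
have cg A : measurable A -> cgen Rg A.
  by move=> mA; apply: (cgen_sigma R0); rewrite RS.
have [fA hfA] := choice (fun k => cg _ (hAB k).1).
have [fB hfB] := choice (fun k => cg _ (hAB k).2.1).
pose e j := if @choice.unpickle (bool * nat * nat)%type j is Some (b, k, i)
  then (if b then fA k i else fB k i) else set0.
exists e; split.
  move=> j; rewrite /e; case: choice.unpickle => [[[[] k] i]|] //.
    exact: (hfA k).1.
  exact: (hfB k).1.
move=> x y xy; apply: contrapT => hn.
have H i : e i x <-> e i y.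
  by apply: contrapT => K; apply: hn; exists i.
have HA k : (AB k).1 x <-> (AB k).1 y.
  apply: (sep_sigma _ (hfA k).2) => _ [i _ <-].
  by have := H (choice.pickle (true, k, i)); rewrite /e choice.pickleK.
have HB k : (AB k).2 x <-> (AB k).2 y.
  apply: (sep_sigma _ (hfB k).2) => _ [i _ <-].
  by have := H (choice.pickle (false, k, i)); rewrite /e choice.pickleK.
have := @sep_sigma _ _ (x, x) (x, y) _ _ Dr.
case.
  move=> _ [k _ <-]; rewrite (hAB k).2.2 /=.
  by split => -[h1 h2]; split => //; apply/(HB k).
by move=> /(_ erefl).
Qed.
Fixpoint partU (T : Type) (A : nat -> set T) n : set T :=
  if n is n'.+1 then partU A n' `|` A n' else set0.

Lemma partU_nd (T : Type) (A : nat -> set T) i j : (i <= j)%N ->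
  partU A i `<=` partU A j.
Proof.
move=> ij; rewrite -(subnKC ij); elim: (j - i)%N => [|k IH]; first by rewrite addn0.
by rewrite addnS /=; apply: subset_trans IH _; exact: subsetUl.
Qed.

Lemma preimage_setD (aT rT : Type) (f : aT -> rT) (X Y : set rT) :
  f @^-1` (X `\` Y) = f @^-1` X `\` f @^-1` Y.
Proof. by rewrite !setDE preimage_setI preimage_setC. Qed.

Unset Implicit Arguments. Set Strict Implicit.

Theorem theorem1p3 (d dO : measure_display) (S : measurableType d)
  (Omega : measurableType dO) (R : realType) (P : probability Omega R)
  (Rg : set (set S)) (pi1 pi2 : Omega -> CS S) :
  measurable [set xy : S * S | xy.1 = xy.2] ->
  Rg `<=` measurable -> setring Rg -> <<s Rg >> = measurable ->
  crset pi1 -> crset pi2 ->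
  (forall A, Rg A ->
     P [set w | proj1_sig (pi1 w) `&` A !=set0] =
     P [set w | proj1_sig (pi2 w) `&` A !=set0]) ->
  sigma_finite_on pi1 Rg ->
  forall B, CSigma B -> law P pi1 B = law P pi2 B.
Proof.
move=> mD Rmeas ring RS cr1 cr2 hP [Ac [RAc [cov fin]]] B CB.
have [e [Re sep]] := separating ring RS mD.
have [R0 RU RD] := ring.
have PiC : Pi Rg `<=` @CSigma d S.
  move=> _ [A RA ->]; apply: sub_sigma_algebra; exists A, (Some 0%N).
  split; first exact: Rmeas.
  apply/seteqP; split => M /=.
  - move=> h; rewrite NA_fin; last by rewrite setIC h; exact: finite_set0.
    by rewrite setIC h fset_set0 cardfs0.
  - move=> /NA_geN [_ h]; apply/seteqP; split => // x [Mx Ax]; apply: h.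
    exists [fset x]%fset; split; first by rewrite cardfs1.
    by move=> y /=; rewrite inE => /eqP ->.
have SgC : <<s Pi Rg >> `<=` @CSigma d S.
  by apply: smallest_sub => //; exact: smallest_sigma_algebra.
pose D := [set X | @CSigma d S X /\ P (pi1 @^-1` X) = P (pi2 @^-1` X)].
have SgD : <<s Pi Rg >> `<=` D.
  apply: (@lambda_system_subset _ (Pi Rg) _ setT D) => //.
  - move=> _ _ [A RA ->] [A' RA' ->]; exists (A `|` A'); first exact: RU.
    apply/seteqP; split => M /=.
      by move=> [h1 h2]; rewrite setIUr h1 h2 setU0.
    by rewrite setIUr setU_eq0.
  - split => //.
    + by split; [exact: sgT|rewrite !preimage_setT].
    + move=> X Y YX [CX hX] [CY hY]; split; first exact: sgD.
      rewrite !preimage_setD.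
      have m1 := cr1 _ CX; have m2 := cr2 _ CX.
      have m1' := cr1 _ CY; have m2' := cr2 _ CY.
      rewrite !measureD ?ltey_eq ?fin_num_measure //.
      rewrite !setIidr; try exact: preimage_subset.
      by congr (_ - _)%E; [exact: hX|exact: hY].
    + move=> F ndF hF; split; first by apply: sgU => i; exact: (hF i).1.
      rewrite !preimage_bigcup.
      have nd (pi : Omega -> CS S) : nondecreasing_seq (fun i => pi @^-1` F i).
        by move=> i j ij; apply/subsetPset; apply: preimage_subset; exact/subsetPset/ndF.
      have c1 := nondecreasing_cvg_mu (mu := P) (fun i => cr1 _ (hF i).1)
        (bigcup_measurable (fun i _ => cr1 _ (hF i).1)) (nd pi1).
      have c2 := nondecreasing_cvg_mu (mu := P) (fun i => cr2 _ (hF i).1)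
        (bigcup_measurable (fun i _ => cr2 _ (hF i).1)) (nd pi2).
      have H1 := cvg_lim (@ereal_hausdorff R) c1.
      have H2 := cvg_lim (@ereal_hausdorff R) c2.
      have {}H1 := H1 eventually_filter; have {}H2 := H2 eventually_filter.
      apply: (etrans (esym H1)); apply: (etrans _ H2).
      by congr (lim (_ @ \oo)); apply: funext => i /=; exact: (hF i).2.
  - move=> _ [A RA ->]; split; first by apply: PiC; exists A.
    have E (pi : Omega -> CS S) : pi @^-1` [set M : CS S | proj1_sig M `&` A = set0]
        = ~` [set w | proj1_sig (pi w) `&` A !=set0].
      apply/seteqP; split => w /=; first by move=> -> /set0P/eqP.
      by move=> h; apply/eqP/negP => /negP/set0P.
    have CA : @CSigma d S (~` [set M : CS S | proj1_sig M `&` A = set0]).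
      by apply: sgC; apply: PiC; exists A.
    have EE (pi : Omega -> CS S) : [set w | proj1_sig (pi w) `&` A !=set0] =
        pi @^-1` (~` [set M : CS S | proj1_sig M `&` A = set0]).
      by rewrite -preimage_setC E setCK.
    rewrite !E !probability_setC ?hP //; rewrite EE; [exact: cr2|exact: cr1].
pose L := [set M : CS S | forall j, finite_set (proj1_sig M `&` Ac j)].
have RFc j : Rg (partU Ac j) by elim: j => //= j IH; exact: RU.
have LFc j M : L M -> LF (partU Ac j) M.
  move=> LM; rewrite /LF /=; elim: j => [|j IH] /=.
    by rewrite setI0; exact: finite_set0.
  by rewrite setIUr finite_setU; split; [exact: IH|exact: LM].
have covF : \bigcup_j partU Ac j = setT.
  apply/seteqP; split => // x _; have : (\bigcup_n Ac n) x by rewrite cov.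
  by move=> [j _ Ajx]; exists j.+1 => //=; right.
have LSg : <<s Pi Rg >> L.
  have -> : L = \bigcap_j LF (Ac j).
    by apply/seteqP; split => M h j; [move=> _; exact: h|exact: h].
  by apply: sgIn => j; apply: (LF_Sg ring Re sep); exact: RAc.
have GF' j A : measurable A -> GF Rg (partU Ac j) A.
  by move=> mA; apply: (GF_full ring Re sep (RFc j)); rewrite RS.
have SomeL A k : measurable A -> <<s Pi Rg >> ([set M | NA A M = Some k] `&` L).
  move=> mA.
  have nd : forall i j, (i <= j)%N -> A `&` partU Ac i `<=` A `&` partU Ac j.
    by move=> i j ij; apply: setIS; exact: partU_nd.
  have -> : [set M | NA A M = Some k] `&` L = \bigcup_m \bigcap_i
      (([set M | NA (A `&` partU Ac (i + m)%N) M = Some k] `&`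
        LF (partU Ac (i + m)%N)) `&` L).
    have AE : A = \bigcup_j (A `&` partU Ac j) by rewrite -setI_bigcupr covF setIT.
    apply/seteqP; split => M /=.
    - move=> [h LM]; rewrite AE in h; have [m hm] := (NA_incr nd M k).1 h.
      by exists m => // i _; split => //; split => //; exact: LFc.
    - move=> [m _ h]; have [_ LM] := h 0%N I; split => //.
      rewrite AE; apply/(NA_incr nd); exists m => i; exact: (h i I).1.1.
  by apply: sgU => m; apply: sgIn => i; apply: sgI2 => //; exact: GF'.
have key : @CSigma d S `<=` [set X | <<s Pi Rg >> (X `&` L)].
  apply: smallest_sub.
  - split => /=.
    + by rewrite set0I; exact: sg0.
    + move=> X hX; have -> : (setT `\` X) `&` L = L `\` (X `&` L).
        apply/seteqP; split => M /=; first by move=> [[_ nX] LM]; split => // -[].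
        by move=> [LM h]; split => //; split => // Xm; exact: h.
      exact: sgD.
    + by move=> F hF; rewrite setI_bigcupl; exact: sgU.
  - move=> _ [A [[k|] [mA ->]]]; first exact: SomeL.
    rewrite /=.
    have -> : [set M | NA A M = None] `&` L =
        L `\` \bigcup_k ([set M | NA A M = Some k] `&` L).
      apply/seteqP; split => M /=.
      * by move=> [h LM]; split => // -[k _ [h' _]]; move: h'; rewrite /= h.
      * move=> [LM h]; split => //; case E: (NA A M) => [k|] //.
        by exfalso; apply: h; exists k.
    by apply: sgD => //; apply: sgU => k; exact: SomeL.
have DL := SgD _ LSg.
have DBL := SgD _ (key _ CB).
have pre1 : pi1 @^-1` L = setT by apply/seteqP; split => // w _ j; exact: fin.
have mL2 : measurable (pi2 @^-1` L) by apply: cr2; exact: SgC.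
have mB2 : measurable (pi2 @^-1` B) by exact: cr2.
have PL2 : P (pi2 @^-1` L) = 1%E.
  by rewrite -DL.2 pre1 probability_setT.
rewrite /law.
have -> : pi1 @^-1` B = pi1 @^-1` (B `&` L) by rewrite preimage_setI pre1 setIT.
rewrite DBL.2 preimage_setI.
have Z : P (pi2 @^-1` B `\` pi2 @^-1` L) = 0%E.
  apply/eqP; rewrite eq_le measure_ge0 andbT.
  have : (P (pi2 @^-1` B `\` pi2 @^-1` L) <= P (~` (pi2 @^-1` L)))%E.
    apply: le_measure; rewrite ?inE; [exact: measurableD|exact: measurableC|].
    by move=> w [].
  by rewrite probability_setC // PL2 subee.
apply: esym; apply: (etrans (measureDI P mB2 mL2)).
apply: (etrans (f_equal (fun z => (z + _)%E) Z)); exact: add0e.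
Qed.
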